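(* For $\mathbf{R}=(\mathbf{R}_t)_{t=1}^T\in\mathrm{SO}(3)^T$ and $\mathbf{s}=(\mathbf{s}_t)_{t=1}^T\in(\mathbb{R}^3)^T$ define $$\mathbf{c}^\star(\mathbf{R},\mathbf{s}) \triangleq 2\mathbf{G}\Big(\mathbf{B}^\mathsf{T}\sum_{t=1}^T \mathbf{W}_t \begin{bmatrix}\mathbf{R}_t^\mathsf{T}\mathbf{y}_t^1-\mathbf{s}_t\\ \vdots\\ \mathbf{R}_t^\mathsf{T}\mathbf{y}_t^N-\mathbf{s}_t\end{bmatrix} + \lambda\bar{\mathbf{c}}\Big)+\mathbf{g},$$ which is affine in the entries of $(\mathbf{R},\mathbf{s})$. Let (Q) be the problem: minimize over $\mathbf{R}_t\in\mathrm{SO}(3)$, $\mathbf{s}_t\in\mathbb{R}^3$ ($t=1,\dots,T$), $\boldsymbol{\Omega}_t\in\mathrm{SO}(3)$, $\mathbf{v}_t\in\mathbb{R}^3$ ($t=1,\dots,T-1$) the objective $$\sum_{t=1}^T\sum_{i=1}^N w_t^i\|\mathbf{R}_t^\mathsf{T}\mathbf{y}_t^i-\mathbf{B}_i\mathbf{c}^\star-\mathbf{s}_t\|^2+\lambda\|\mathbf{c}^\star-\bar{\mathbf{c}}\|^2+\sum_{t=1}^{T-2}\big(\omega_t\|\mathbf{v}_{t+1}-\mathbf{v}_t\|^2+\kappa_t\|\boldsymbol{\Omega}_{t+1}-\boldsymbol{\Omega}_t\|_F^2\big),$$ with $\mathbf{c}^\star=\mathbf{c}^\star(\mathbf{R},\mathbf{s})$,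 subject to $\boldsymbol{\Omega}_t\mathbf{s}_{t+1}=\mathbf{s}_t+\mathbf{v}_t$ and $\mathbf{R}_{t+1}=\mathbf{R}_t\boldsymbol{\Omega}_t$ for $t=1,\dots,T-1$. Then: (i) (P) and (Q) have the same optimal value, and $(\mathbf{R}_t,\mathbf{p}_t,\mathbf{v}_t,\boldsymbol{\Omega}_t,\mathbf{c})$ is optimal for (P) if and only if $(\mathbf{R}_t,\mathbf{s}_t,\mathbf{v}_t,\boldsymbol{\Omega}_t)$ with $\mathbf{s}_t=\mathbf{R}_t^\mathsf{T}\mathbf{p}_t$ is optimal for (Q) and $\mathbf{c}=\mathbf{c}^\star(\mathbf{R},\mathbf{s})$; (ii) (Q) is a quadratically constrained quadratic program: its objective is a polynomial of degree at most $2$ in the entries of $(\mathbf{R}_t,\mathbf{s}_t,\mathbf{v}_t,\boldsymbol{\Omega}_t)$, and all its constraints (including membership in $\mathrm{SO}(3)$) can be written as polynomial equations of degree at most $2$ in these entries.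
   Context: Data: integers $T\ge 2$, $N\ge1$, $K\ge1$; matrices $\mathbf{B}_i\in\mathbb{R}^{3\times K}$ ($i=1,\dots,N$); measurements $\mathbf{y}_t^i\in\mathbb{R}^3$; weights $w_t^i>0$, $\omega_t\ge0$, $\kappa_t\ge0$, $\lambda>0$; $\bar{\mathbf{c}}\triangleq\frac1K\mathbf{1}_K$. Notation: $\mathbf{W}_t \triangleq \mathrm{blkdiag}(w_t^1\mathbf{I}_3,\dots,w_t^N\mathbf{I}_3)$, $\mathbf{B}\triangleq[\mathbf{B}_1^\mathsf{T},\dots,\mathbf{B}_N^\mathsf{T}]^\mathsf{T}\in\mathbb{R}^{3N\times K}$, $\mathbf{H}\triangleq \tfrac12(\mathbf{B}^\mathsf{T}(\sum_t\mathbf{W}_t)\mathbf{B}+\lambda\mathbf{I}_K)^{-1}$, $\mathbf{G}\triangleq \mathbf{H}-\frac{\mathbf{H}\mathbf{1}_K\mathbf{1}_K^\mathsf{T}\mathbf{H}}{\mathbf{1}_K^\mathsf{T}\mathbf{H}\mathbf{1}_K}$, $\mathbf{g}\triangleq\frac{\mathbf{H}\mathbf{1}_K}{\mathbf{1}_K^\mathsf{T}\mathbf{H}\mathbf{1}_K}$. Problem (P): minimize over $\mathbf{R}_t\in\mathrm{SO}(3)$, $\mathbf{p}_t\in\mathbb{R}^3$ ($t=1,\dots,T$), $\boldsymbol{\Omega}_t\in\mathrm{SO}(3)$, $\mathbf{v}_t\in\mathbb{R}^3$ ($t=1,\dots,T-1$), $\mathbf{c}\in\mathbb{R}^K$ with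 $\mathbf{1}_K^\mathsf{T}\mathbf{c}=1$ the objective $$\sum_{t=1}^T\sum_{i=1}^N w_t^i\|\mathbf{y}_t^i-\mathbf{R}_t\mathbf{B}_i\mathbf{c}-\mathbf{p}_t\|^2+\lambda\|\mathbf{c}-\bar{\mathbf{c}}\|^2+\sum_{t=1}^{T-2}\big(\omega_t\|\mathbf{v}_{t+1}-\mathbf{v}_t\|^2+\kappa_t\|\boldsymbol{\Omega}_{t+1}-\boldsymbol{\Omega}_t\|_F^2\big)$$ subject to $\mathbf{p}_{t+1}=\mathbf{p}_t+\mathbf{R}_t\mathbf{v}_t$, $\mathbf{R}_{t+1}=\mathbf{R}_t\boldsymbol{\Omega}_t$ for $t=1,\dots,T-1$. *)

(* Defs.v *)
From mathcomp Require Import all_boot all_order all_algebra.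
From mathcomp Require Import mpoly.
From mathcomp Require Import boolp classical_sets reals.

Set Implicit Arguments.
Unset Strict Implicit.
Unset Printing Implicit Defensive.

Import Order.TTheory GRing.Theory Num.Theory.
Local Open Scope ring_scope.

(* Conventions: time indices are 0-based, t = 0..T-1 (paper: 1..T);
   Omega_t, v_t for t = 0..T-2; smoothing terms for t = 0..T-3.
   Sequences indexed by time are functions nat -> ..., only the indices in
   range matter. *)

Section Prop2.
Context {F : realType} (T N K : nat).
Context (Bm : 'I_N -> 'M[F]_(3, K)) (y : nat -> 'I_N -> 'cV[F]_3)
        (w : nat -> 'I_N -> F) (om ka : nat -> F) (lam : F).

Definition sqn {m n : nat} (A : 'M[F]_(m, n)) : F := \sum_i \sum_j A i j ^+ 2.

Definition is_SO3 (M : 'M[F]_3) : Prop := M^T *m M = 1%:M /\ \det M = 1.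

Definition onesK : 'cV[F]_K := const_mx 1.
Definition cbar : 'cV[F]_K := (K%:R)^-1 *: onesK.

(* B^T (sum_t W_t) B, written blockwise: sum_t sum_i w_t^i B_i^T B_i *)
Definition BtWB : 'M[F]_K := \sum_(t < T) \sum_(i < N) w t i *: ((Bm i)^T *m Bm i).
Definition Hmat : 'M[F]_K := 2^-1 *: invmx (BtWB + lam *: 1%:M).
Definition den1H1 : F := ((onesK^T *m Hmat *m onesK) ord0 ord0).
Definition Gmat : 'M[F]_K :=
  Hmat - den1H1^-1 *: (Hmat *m onesK *m onesK^T *m Hmat).
Definition gvec : 'cV[F]_K := den1H1^-1 *: (Hmat *m onesK).

(* c*(R,s); the product B^T W_t [R_t^T y_t^i - s_t]_i written blockwise *)
Definition cstar (Rot : nat -> 'M[F]_3) (s : nat -> 'cV[F]_3) : 'cV[F]_K :=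
  2%:R *: (Gmat *m (\sum_(t < T) \sum_(i < N)
              w t i *: ((Bm i)^T *m ((Rot t)^T *m y t i - s t))
            + lam *: cbar)) + gvec.

Definition smooth (Om : nat -> 'M[F]_3) (v : nat -> 'cV[F]_3) : F :=
  \sum_(t < T - 2) (om t * sqn (v t.+1 - v t) + ka t * sqn (Om t.+1 - Om t)).

Definition Pobj (Rot : nat -> 'M[F]_3) (p : nat -> 'cV[F]_3)
    (Om : nat -> 'M[F]_3) (v : nat -> 'cV[F]_3) (c : 'cV[F]_K) : F :=
  \sum_(t < T) \sum_(i < N) w t i * sqn (y t i - Rot t *m (Bm i *m c) - p t)
  + lam * sqn (c - cbar) + smooth Om v.

Definition Pfeas (Rot : nat -> 'M[F]_3) (p : nat -> 'cV[F]_3)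
    (Om : nat -> 'M[F]_3) (v : nat -> 'cV[F]_3) (c : 'cV[F]_K) : Prop :=
  [/\ forall t, (t < T)%N -> is_SO3 (Rot t),
      forall t, (t < T - 1)%N -> is_SO3 (Om t),
      \sum_(k < K) c k ord0 = 1 &
      forall t, (t < T - 1)%N -> p t.+1 = p t + Rot t *m v t /\ Rot t.+1 = Rot t *m Om t].

Definition Popt Rot p Om v c : Prop :=
  Pfeas Rot p Om v c /\
  forall Rot' p' Om' v' c', Pfeas Rot' p' Om' v' c' ->
    Pobj Rot p Om v c <= Pobj Rot' p' Om' v' c'.

Definition Pval : F :=
  inf [set x : F | exists Rot p Om v c, Pfeas Rot p Om v c /\ x = Pobj Rot p Om v c].

Definition Qobj (Rot : nat -> 'M[F]_3) (s : nat -> 'cV[F]_3)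
    (Om : nat -> 'M[F]_3) (v : nat -> 'cV[F]_3) : F :=
  let c := cstar Rot s in
  \sum_(t < T) \sum_(i < N) w t i * sqn ((Rot t)^T *m y t i - Bm i *m c - s t)
  + lam * sqn (c - cbar) + smooth Om v.

Definition Qfeas (Rot : nat -> 'M[F]_3) (s : nat -> 'cV[F]_3)
    (Om : nat -> 'M[F]_3) (v : nat -> 'cV[F]_3) : Prop :=
  [/\ forall t, (t < T)%N -> is_SO3 (Rot t),
      forall t, (t < T - 1)%N -> is_SO3 (Om t) &
      forall t, (t < T - 1)%N -> Om t *m s t.+1 = s t + v t /\ Rot t.+1 = Rot t *m Om t].

Definition Qopt Rot s Om v : Prop :=
  Qfeas Rot s Om v /\
  forall Rot' s' Om' v', Qfeas Rot' s' Om' v' -> Qobj Rot s Om v <= Qobj Rot' s' Om' v'.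

Definition Qval : F :=
  inf [set x : F | exists Rot s Om v, Qfeas Rot s Om v /\ x = Qobj Rot s Om v].

(* ---------- Coordinates of (R_t, s_t, Omega_t, v_t) as a vector of
   nvar = 9T + 3T + 9(T-1) + 3(T-1) real variables ---------- *)
Definition nvar : nat := (12 * T + 12 * (T - 1))%N.

Definition getx (x : 'I_nvar -> F) (k : nat) : F := oapp x 0 (insub k).

Definition dec_Rot (x : 'I_nvar -> F) (t : nat) : 'M[F]_3 :=
  \matrix_(a < 3, b < 3) getx x (9 * t + 3 * a + b).
Definition dec_s (x : 'I_nvar -> F) (t : nat) : 'cV[F]_3 :=
  \col_(a < 3) getx x (9 * T + 3 * t + a).
Definition dec_Om (x : 'I_nvar -> F) (t : nat) : 'M[F]_3 :=
  \matrix_(a < 3, b < 3) getx x (12 * T + 9 * t + 3 * a + b).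
Definition dec_v (x : 'I_nvar -> F) (t : nat) : 'cV[F]_3 :=
  \col_(a < 3) getx x (12 * T + 9 * (T - 1) + 3 * t + a).

End Prop2.

(* Main.v *)
Require Import Defs.
From mathcomp Require Import all_boot all_order all_algebra.
From mathcomp Require Import mpoly.
From mathcomp Require Import boolp classical_sets reals.
From mathcomp Require Import ring lra.
From mathcomp Require Import zify.

Set Implicit Arguments.
Unset Strict Implicit.
Unset Printing Implicit Defensive.
Import Order.TTheory GRing.Theory Num.Theory.
Local Open Scope ring_scope.

Section PolyRep.
Variables (F : realType) (n : nat).
Implicit Types (f g : ('I_n -> F) -> F).

Definition pr (d : nat) f := exists P : {mpoly F[n]},
  (msize P <= d.+1)%N /\ forall x, f x = P.@[x].

Lemma pr_mono d e f : (d <= e)%N -> pr d f -> pr e f.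
Proof. by move=> de [P [hP hf]]; exists P; split=> //; apply: leq_trans hP _. Qed.

Lemma pr_const d c : pr d (fun _ => c).
Proof.
exists c%:MP; split; last by move=> x; rewrite mevalC.
by rewrite msizeC; case: (c != 0).
Qed.

Lemma pr_var d (i : 'I_n) : pr d.+1 (fun x => x i).
Proof.
exists 'X_i; split; last by move=> x; rewrite mevalXU.
by rewrite msizeX mdeg1.
Qed.

Lemma pr_add d f g : pr d f -> pr d g -> pr d (fun x => f x + g x).
Proof.
move=> [P [hP hf]] [Q [hQ hg]]; exists (P + Q); split.
  by apply: leq_trans (msizeD_le _ _) _; rewrite geq_max hP hQ.
by move=> x; rewrite mevalD hf hg.
Qed.

Lemma pr_opp d f : pr d f -> pr d (fun x => - f x).
Proof.
move=> [P [hP hf]]; exists (- P); split; first by rewrite msizeN.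
by move=> x; rewrite mevalN hf.
Qed.

Lemma pr_sub d f g : pr d f -> pr d g -> pr d (fun x => f x - g x).
Proof. by move=> hf hg; apply: pr_add => //; apply: pr_opp. Qed.

Lemma pr_mul d e f g : pr d f -> pr e g -> pr (d + e) (fun x => f x * g x).
Proof.
move=> [P [hP hf]] [Q [hQ hg]]; exists (P * Q); split; last first.
  by move=> x; rewrite mevalM hf hg.
have [->|nP] := eqVneq P 0; first by rewrite mul0r msize0.
have [->|nQ] := eqVneq Q 0; first by rewrite mulr0 msize0.
rewrite msizeM //.
have h1 : (0 < msize P)%N by rewrite lt0n msize_poly_eq0.
have h2 : (0 < msize Q)%N by rewrite lt0n msize_poly_eq0.
move: hP hQ h1 h2; case: (mmeasure mdeg P) => // a; case: (mmeasure mdeg Q) => // b; rewrite addSn /=; lia.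
Qed.

Lemma pr_scale d c f : pr d f -> pr d (fun x => c * f x).
Proof. by move=> hf; have := pr_mul (pr_const 0 c) hf. Qed.

Lemma pr_sum d (I : Type) (r : seq I) (P : pred I) (h : I -> ('I_n -> F) -> F) :
  (forall i, P i -> pr d (h i)) -> pr d (fun x => \sum_(i <- r | P i) h i x).
Proof.
move=> hh; elim: r => [|a r IH].
  by under [X in pr _ X]funext => x do rewrite big_nil; apply: pr_const.
case Pa: (P a).
  under [X in pr _ X]funext => x do rewrite big_cons Pa.
  by apply: pr_add => //; apply: hh.
by under [X in pr _ X]funext => x do rewrite big_cons Pa.
Qed.

Lemma pr_prod d m (h : 'I_m -> ('I_n -> F) -> F) :
  (forall i, pr d (h i)) -> pr (d * m) (fun x => \prod_(i < m) h i x).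
Proof.
elim: m h => [|m IH] h hh.
  by under [X in pr _ X]funext => x do rewrite big_ord0; apply: pr_const.
under [X in pr _ X]funext => x do rewrite big_ord_recr.
rewrite mulnS addnC; apply: pr_mul => //.
by apply: IH.
Qed.

Lemma pr_ext d f g : f =1 g -> pr d f -> pr d g.
Proof. by move=> /funext ->. Qed.

End PolyRep.

Section MatRep.
Variables (F : realType) (n : nat).

Definition mpr (d : nat) (a b : nat) (M : ('I_n -> F) -> 'M[F]_(a, b)) :=
  forall i j, pr d (fun x => M x i j).

Lemma mpr_mono d e a b (M : ('I_n -> F) -> 'M[F]_(a, b)) :
  (d <= e)%N -> mpr d M -> mpr e M.
Proof. by move=> de hM i j; apply: pr_mono (hM i j). Qed.

Lemma mpr_const d a b (C : 'M[F]_(a, b)) : mpr d (fun _ => C).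
Proof. by move=> i j; apply: pr_const. Qed.

Lemma mpr_add d a b (M1 M2 : ('I_n -> F) -> 'M[F]_(a, b)) :
  mpr d M1 -> mpr d M2 -> mpr d (fun x => M1 x + M2 x).
Proof.
move=> h1 h2 i j; apply: pr_ext (pr_add (h1 i j) (h2 i j)) => x.
by rewrite mxE.
Qed.

Lemma mpr_opp d a b (M1 : ('I_n -> F) -> 'M[F]_(a, b)) :
  mpr d M1 -> mpr d (fun x => - M1 x).
Proof.
move=> h1 i j; apply: pr_ext (pr_opp (h1 i j)) => x.
by rewrite mxE.
Qed.

Lemma mpr_sub d a b (M1 M2 : ('I_n -> F) -> 'M[F]_(a, b)) :
  mpr d M1 -> mpr d M2 -> mpr d (fun x => M1 x - M2 x).
Proof. by move=> h1 h2; apply: mpr_add => //; apply: mpr_opp. Qed.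

Lemma mpr_scale d a b (c : F) (M1 : ('I_n -> F) -> 'M[F]_(a, b)) :
  mpr d M1 -> mpr d (fun x => c *: M1 x).
Proof.
move=> h1 i j; apply: pr_ext (pr_scale c (h1 i j)) => x.
by rewrite mxE.
Qed.

Lemma mpr_tr d a b (M1 : ('I_n -> F) -> 'M[F]_(a, b)) :
  mpr d M1 -> mpr d (fun x => (M1 x)^T).
Proof.
move=> h1 i j; apply: pr_ext (h1 j i) => x.
by rewrite mxE.
Qed.

Lemma mpr_mul d e a b c (M1 : ('I_n -> F) -> 'M[F]_(a, b))
   (M2 : ('I_n -> F) -> 'M[F]_(b, c)) :
  mpr d M1 -> mpr e M2 -> mpr (d + e) (fun x => M1 x *m M2 x).
Proof.
move=> h1 h2 i j.
have := @pr_sum F n (d + e) _ (index_enum 'I_b) xpredT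
  (fun k x => M1 x i k * M2 x k j).
move=> H; apply: pr_ext (H _) => [x|k _]; first by rewrite mxE.
exact: pr_mul.
Qed.

Lemma mpr_cmul d a b c (C : 'M[F]_(a, b))
   (M2 : ('I_n -> F) -> 'M[F]_(b, c)) :
  mpr d M2 -> mpr d (fun x => C *m M2 x).
Proof. by move=> h2; apply: (@mpr_mul 0 d) => //; apply: mpr_const. Qed.

Lemma mpr_sum d a b (I : Type) (r : seq I) (P : pred I)
   (h : I -> ('I_n -> F) -> 'M[F]_(a, b)) :
  (forall i, P i -> mpr d (h i)) -> mpr d (fun x => \sum_(i <- r | P i) h i x).
Proof.
move=> hh i j; apply: pr_ext (@pr_sum F n d _ r P (fun k x => h k x i j) _) => [x|k Pk].
  by rewrite summxE.
exact: hh.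
Qed.

Lemma pr_sqn d a b (M1 : ('I_n -> F) -> 'M[F]_(a, b)) :
  mpr d M1 -> pr (d + d) (fun x => sqn (M1 x)).
Proof.
move=> h1; rewrite /sqn.
apply: pr_sum => i _; apply: pr_sum => j _.
by under [X in pr _ X]funext => x do rewrite expr2; apply: pr_mul.
Qed.

End MatRep.

Lemma pr_getx (F : realType) (T : nat) (k : nat) :
  pr 1 (fun x : 'I_(nvar T) -> F => getx x k).
Proof.
rewrite /getx; case: insubP => [u _ _|_] /=; first exact: pr_var.
exact: pr_const.
Qed.

Section Dec.
Variables (F : realType) (T : nat).
Local Notation n := (nvar T).

Lemma mpr_Rot t : mpr 1 (fun x : 'I_n -> F => dec_Rot x t).
Proof. by move=> i j; apply: pr_ext (pr_getx _ _ _) => x; rewrite mxE. Qed.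
Lemma mpr_s t : mpr 1 (fun x : 'I_n -> F => dec_s x t).
Proof. by move=> i j; apply: pr_ext (pr_getx _ _ _) => x; rewrite mxE. Qed.
Lemma mpr_Om t : mpr 1 (fun x : 'I_n -> F => dec_Om x t).
Proof. by move=> i j; apply: pr_ext (pr_getx _ _ _) => x; rewrite mxE. Qed.
Lemma mpr_v t : mpr 1 (fun x : 'I_n -> F => dec_v x t).
Proof. by move=> i j; apply: pr_ext (pr_getx _ _ _) => x; rewrite mxE. Qed.

Variables (N K : nat) (Bm : 'I_N -> 'M[F]_(3, K)) (y : nat -> 'I_N -> 'cV[F]_3)
  (w : nat -> 'I_N -> F) (om ka : nat -> F) (lam : F).

Lemma mpr_cstar : mpr 1 (fun x : 'I_n -> F => cstar T Bm y w lam (dec_Rot x) (dec_s x)).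
Proof.
rewrite /cstar; apply: mpr_add; last exact: mpr_const.
apply: mpr_scale; apply: mpr_cmul; apply: mpr_add; last exact: mpr_const.
apply: mpr_sum => t _; apply: mpr_sum => i _; apply: mpr_scale; apply: mpr_cmul.
apply: mpr_sub; last exact: mpr_s.
by apply: (@mpr_mul _ _ 1 0) => //; [apply: mpr_tr; apply: mpr_Rot|apply: mpr_const].
Qed.

Lemma pr_Qobj : pr 2 (fun x : 'I_n -> F =>
  Qobj T Bm y w om ka lam (dec_Rot x) (dec_s x) (dec_Om x) (dec_v x)).
Proof.
rewrite /Qobj /smooth; apply: pr_add; first apply: pr_add.
- apply: pr_sum => t _; apply: pr_sum => i _; apply: pr_scale; apply: (@pr_sqn _ _ 1).
  apply: mpr_sub; last exact: mpr_s.
  apply: mpr_sub; last by apply: mpr_cmul; apply: mpr_cstar.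
  by apply: (@mpr_mul _ _ 1 0) => //; [apply: mpr_tr; apply: mpr_Rot|apply: mpr_const].
- apply: pr_scale; apply: (@pr_sqn _ _ 1); apply: mpr_sub; last exact: mpr_const.
  exact: mpr_cstar.
- apply: pr_sum => t _; apply: pr_add; apply: pr_scale; apply: (@pr_sqn _ _ 1);
  apply: mpr_sub; (apply: mpr_v || apply: mpr_Om).
Qed.

End Dec.

Section Constr.
Variables (F : realType) (n : nat).

Definition Qrep (Phi : ('I_n -> F) -> Prop) := exists cs : seq {mpoly F[n]},
  all (fun q => msize q <= 3)%N cs /\
  forall x, Phi x <-> all (fun q => q.@[x] == 0) cs.

Lemma Qrep_iff (Phi Psi : ('I_n -> F) -> Prop) :
  (forall x, Phi x <-> Psi x) -> Qrep Phi -> Qrep Psi.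
Proof.
move=> e [cs [h1 h2]]; exists cs; split=> // x.
by split => [/e/h2|/h2/e].
Qed.

Lemma Qrep_eq (f : ('I_n -> F) -> F) : pr 2 f -> Qrep (fun x => f x = 0).
Proof.
move=> [P [hP hf]]; exists [:: P]; split; first by rewrite /= hP.
by move=> x; rewrite /= andbT hf; split => [->|/eqP].
Qed.

Lemma Qrep_and (Phi Psi : ('I_n -> F) -> Prop) :
  Qrep Phi -> Qrep Psi -> Qrep (fun x => Phi x /\ Psi x).
Proof.
move=> [cs [h1 h2]] [ds [h3 h4]]; exists (cs ++ ds); split.
  by rewrite all_cat h1 h3.
by move=> x; rewrite all_cat h2 h4; split => [[-> ->]|/andP].
Qed.

Lemma Qrep_seq (I : eqType) (s : seq I) (Phi : I -> ('I_n -> F) -> Prop) :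
  (forall i, Qrep (Phi i)) -> Qrep (fun x => forall i, i \in s -> Phi i x).
Proof.
move=> h; elim: s => [|a s IH].
  by exists [::]; split => // x; split => // _ i; rewrite in_nil.
apply: Qrep_iff (Qrep_and (h a) IH) => x; split.
  move=> [ha hs] i; rewrite in_cons => /orP[/eqP->//|]; exact: hs.
move=> H; split; first by apply: H; rewrite mem_head.
by move=> i hi; apply: H; rewrite in_cons hi orbT.
Qed.

Lemma Qrep_fin (I : finType) (Phi : I -> ('I_n -> F) -> Prop) :
  (forall i, Qrep (Phi i)) -> Qrep (fun x => forall i, Phi i x).
Proof.
move=> h; apply: Qrep_iff (Qrep_seq (enum I) h) => x; split => H i.
  by apply: H; rewrite mem_enum.
by move=> _; apply: H.
Qed.

Lemma Qrep_nat (m : nat) (Phi : nat -> ('I_n -> F) -> Prop) :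
  (forall i, Qrep (Phi i)) -> Qrep (fun x => forall t, (t < m)%N -> Phi t x).
Proof.
move=> h; apply: Qrep_iff (Qrep_seq (iota 0 m) h) => x; split => H i hi.
  by apply: H; rewrite mem_iota.
by apply: H; move: hi; rewrite mem_iota.
Qed.

Lemma Qrep_mxeq a b (M1 M2 : ('I_n -> F) -> 'M[F]_(a, b)) :
  mpr 2 M1 -> mpr 2 M2 -> Qrep (fun x => M1 x = M2 x).
Proof.
move=> h1 h2.
have H0 : Qrep (fun x => forall ij : 'I_a * 'I_b, M1 x ij.1 ij.2 - M2 x ij.1 ij.2 = 0).
  apply: Qrep_fin => ij; apply: Qrep_eq.
  exact: (pr_sub (h1 ij.1 ij.2) (h2 ij.1 ij.2)).
apply: Qrep_iff H0 => x; split=> [H|E [i j]]; last by rewrite E subrr.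
apply/matrixP => i j; apply/eqP; rewrite -subr_eq0; apply/eqP.
exact: (H (i, j)).
Qed.

Lemma mpr_det d m (M : ('I_n -> F) -> 'M[F]_m) :
  mpr d M -> pr (d * m) (fun x => \det (M x)).
Proof.
move=> h; rewrite /determinant.
apply: pr_sum => s _; apply: pr_scale; exact: pr_prod.
Qed.

Lemma pr_cofactor m (M : ('I_n -> F) -> 'M[F]_m.+1) i j :
  mpr 1 M -> pr m (fun x => cofactor (M x) i j).
Proof.
move=> h; rewrite /cofactor; apply: pr_scale.
apply: (@pr_mono _ _ (1 * m)); first by rewrite mul1n.
apply: mpr_det => k l; apply: pr_ext (h _ _) => x; by rewrite !mxE.
Qed.

Lemma SO3_eqs (M : 'M[F]_3) :
  is_SO3 M <-> M^T *m M = 1%:M /\ forall i j, M i j = cofactor M i j.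
Proof.
split=> [[h1 h2]|[h1 h2]].
  split=> // i j.
  have e1 : M *m \adj M = 1%:M by rewrite mul_mx_adj h2.
  have e2 : \adj M = M^T by rewrite -[LHS]mul1mx -h1 -mulmxA e1 mulmx1.
  by move/matrixP: e2 => /(_ j i); rewrite !mxE => ->.
split=> //.
rewrite (expand_det_col _ 0).
transitivity ((M^T *m M) 0 0); last by rewrite h1 mxE.
by rewrite mxE; apply: eq_bigr => i _; rewrite -h2 mxE.
Qed.

Lemma Qrep_SO3 (M : ('I_n -> F) -> 'M[F]_3) :
  mpr 1 M -> Qrep (fun x => is_SO3 (M x)).
Proof.
move=> h.
apply: Qrep_iff (fun x => iff_sym (SO3_eqs (M x))) _.
apply: Qrep_and.
  apply: Qrep_mxeq; last exact: mpr_const.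
  by apply: (@mpr_mul _ _ 1 1) => //; apply: mpr_tr.
apply: (@Qrep_iff (fun x => forall ij : 'I_3 * 'I_3,
   M x ij.1 ij.2 - cofactor (M x) ij.1 ij.2 = 0)).
  move=> x; split=> [H i j|H [i j]]; last by rewrite /= -H subrr.
  by apply/eqP; rewrite -subr_eq0; apply/eqP; apply: (H (i, j)).
apply: Qrep_fin => -[i j]; apply: Qrep_eq; apply: pr_sub.
  exact: pr_mono (h i j).
exact: pr_cofactor.
Qed.

End Constr.

Lemma Qrep_Qfeas (F : realType) (T : nat) :
  Qrep (fun x : 'I_(nvar T) -> F =>
    Qfeas T (dec_Rot x) (dec_s x) (dec_Om x) (dec_v x)).
Proof.
apply: (@Qrep_iff _ _ (fun x => (forall t, (t < T)%N -> is_SO3 (dec_Rot x t)) /\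
  ((forall t, (t < T - 1)%N -> is_SO3 (dec_Om x t)) /\
  (forall t, (t < T - 1)%N -> (dec_Om x t *m dec_s x t.+1 = dec_s x t + dec_v x t /\
      dec_Rot x t.+1 = dec_Rot x t *m dec_Om x t))))).
  by move=> x; split=> [[a [b c]]|[a b c]]; [split|].
apply: Qrep_and; first by apply: Qrep_nat => t; apply: Qrep_SO3; apply: mpr_Rot.
apply: Qrep_and; first by apply: Qrep_nat => t; apply: Qrep_SO3; apply: mpr_Om.
apply: Qrep_nat => t; apply: Qrep_and; apply: Qrep_mxeq.
- by apply: (@mpr_mul _ _ 1 1) => //; [apply: mpr_Om|apply: mpr_s].
- by apply: mpr_add; apply: (@mpr_mono _ _ 1) => //; [apply: mpr_s|apply: mpr_v].
- by apply: (@mpr_mono _ _ 1) => //; apply: mpr_Rot.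
- by apply: (@mpr_mul _ _ 1 1) => //; [apply: mpr_Rot|apply: mpr_Om].
Qed.

Section Dot.
Variable F : realType.

Definition dot m (u v : 'cV[F]_m) : F := (u^T *m v) 0 0.

Lemma dotE m (u v : 'cV[F]_m) : dot u v = \sum_k u k 0 * v k 0.
Proof. by rewrite /dot mxE; apply: eq_bigr => k _; rewrite mxE. Qed.

Lemma dotC m (u v : 'cV[F]_m) : dot u v = dot v u.
Proof. by rewrite !dotE; apply: eq_bigr => k _; rewrite mulrC. Qed.

Lemma dotDl m (u1 u2 v : 'cV[F]_m) : dot (u1 + u2) v = dot u1 v + dot u2 v.
Proof. by rewrite !dotE -big_split; apply: eq_bigr => k _; rewrite mxE mulrDl. Qed.

Lemma dotNl m (u v : 'cV[F]_m) : dot (- u) v = - dot u v.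
Proof. by rewrite !dotE -sumrN; apply: eq_bigr => k _; rewrite mxE mulNr. Qed.

Lemma dotBl m (u1 u2 v : 'cV[F]_m) : dot (u1 - u2) v = dot u1 v - dot u2 v.
Proof. by rewrite dotDl dotNl. Qed.

Lemma dotZl m a (u v : 'cV[F]_m) : dot (a *: u) v = a * dot u v.
Proof. by rewrite !dotE big_distrr; apply: eq_bigr => k _; rewrite !mxE -mulrA. Qed.

Lemma dot0l m (v : 'cV[F]_m) : dot 0 v = 0.
Proof. by rewrite dotE big1 // => k _; rewrite mxE mul0r. Qed.

Lemma dotDr m (u v1 v2 : 'cV[F]_m) : dot u (v1 + v2) = dot u v1 + dot u v2.
Proof. by rewrite dotC dotDl !(dotC _ u). Qed.
Lemma dotBr m (u v1 v2 : 'cV[F]_m) : dot u (v1 - v2) = dot u v1 - dot u v2.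
Proof. by rewrite dotC dotBl !(dotC _ u). Qed.
Lemma dotZr m a (u v : 'cV[F]_m) : dot u (a *: v) = a * dot u v.
Proof. by rewrite dotC dotZl dotC. Qed.
Lemma dot0r m (v : 'cV[F]_m) : dot v 0 = 0.
Proof. by rewrite dotC dot0l. Qed.

Lemma dot_suml m (I : Type) (r : seq I) (P : pred I) (f : I -> 'cV[F]_m) v :
  dot (\sum_(i <- r | P i) f i) v = \sum_(i <- r | P i) dot (f i) v.
Proof.
elim: r => [|a r IH]; first by rewrite !big_nil dot0l.
by rewrite !big_cons; case: (P a); rewrite ?dotDl IH.
Qed.

Lemma dot_sumr m (I : Type) (r : seq I) (P : pred I) (f : I -> 'cV[F]_m) v :
  dot v (\sum_(i <- r | P i) f i) = \sum_(i <- r | P i) dot v (f i).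
Proof. by rewrite dotC dot_suml; apply: eq_bigr => i _; rewrite dotC. Qed.

Lemma dot_mull m p (M : 'M[F]_(p, m)) (u : 'cV[F]_m) v :
  dot (M *m u) v = dot u (M^T *m v).
Proof. by rewrite /dot trmx_mul mulmxA. Qed.

Lemma sqn_dot m (u : 'cV[F]_m) : sqn u = dot u u.
Proof. by rewrite /sqn dotE; apply: eq_bigr => k _; rewrite big_ord1 expr2. Qed.

Lemma dot_ge0 m (u : 'cV[F]_m) : 0 <= dot u u.
Proof. by rewrite dotE; apply: sumr_ge0 => k _; rewrite -expr2 sqr_ge0. Qed.

Lemma dot_eq0 m (u : 'cV[F]_m) : dot u u = 0 -> u = 0.
Proof.
rewrite dotE => /psumr_eq0P H; apply/matrixP => i j.
rewrite (ord1 j) mxE; apply/eqP; rewrite -sqrf_eq0 expr2; apply/eqP.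
by apply: H => // k _; rewrite -expr2 sqr_ge0.
Qed.

Lemma mx11_mul m (u : 'cV[F]_m) (M : 'M[F]_1) : u *m M = M 0 0 *: u.
Proof. by rewrite {1}[M]mx11_scalar mul_mx_scalar. Qed.

End Dot.

Section Alg.
Variables (F : realType) (T N K : nat) (Bm : 'I_N -> 'M[F]_(3, K))
  (w : nat -> 'I_N -> F) (lam : F).
Hypotheses (hK : (0 < K)%N) (hw : forall t (i : 'I_N), (t < T)%N -> 0 < w t i)
  (hlam : 0 < lam).

Local Notation A := (BtWB T Bm w + lam *: 1%:M).
Local Notation H := (Hmat T Bm w lam).
Local Notation G := (Gmat T Bm w lam).
Local Notation g := (gvec T Bm w lam).
Local Notation gam := (den1H1 T Bm w lam).
Local Notation one := (onesK K : 'cV[F]_K).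

Lemma A_tr : A^T = A.
Proof.
rewrite linearD /= linearZ /= trmx1 /BtWB linear_sum /=; congr (_ + _).
apply: eq_bigr => t _; rewrite linear_sum /=; apply: eq_bigr => i _.
by rewrite linearZ /= trmx_mul trmxK.
Qed.

Lemma A_quad d : dot d (A *m d) =
  \sum_(t < T) \sum_(i < N) w t i * dot (Bm i *m d) (Bm i *m d) + lam * dot d d.
Proof.
rewrite mulmxDl dotDr; congr (_ + _); last by rewrite -scalemxAl mul1mx dotZr.
rewrite /BtWB mulmx_suml dot_sumr; apply: eq_bigr => t _.
rewrite mulmx_suml dot_sumr; apply: eq_bigr => i _.
by rewrite -scalemxAl dotZr -mulmxA -dot_mull.
Qed.

Lemma A_lb d : lam * dot d d <= dot d (A *m d).
Proof.
rewrite A_quad lerDr; apply: sumr_ge0 => t _; apply: sumr_ge0 => i _.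
by apply: mulr_ge0; [apply: ltW; apply: hw | apply: dot_ge0].
Qed.

Lemma A_pos d : dot d (A *m d) = 0 -> d = 0.
Proof.
move=> h0; apply: dot_eq0; have := A_lb d; rewrite h0 => h1.
have h2 := dot_ge0 d; apply/eqP; rewrite eq_le h2 andbT.
by move: h1; rewrite pmulr_rle0.
Qed.

Lemma A_unit : A \in unitmx.
Proof.
rewrite unitmxE unitfE; apply/negP => /det0P [v nz vA].
have h : A *m v^T = 0 by rewrite -{1}A_tr -trmx_mul vA trmx0.
have : v^T = 0 by apply: A_pos; rewrite h dot0r.
by move/(congr1 trmx); rewrite trmxK trmx0 => e; move: nz; rewrite e eqxx.
Qed.

Lemma AH : A *m H = 2^-1 *: 1%:M.
Proof. by rewrite /Hmat -scalemxAr mulmxV // A_unit. Qed.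

Lemma one_neq0 : one != 0.
Proof.
apply/negP => /eqP /matrixP /(_ (Ordinal hK) 0); rewrite !mxE => /eqP.
by rewrite oner_eq0.
Qed.

Lemma gam_pos : 0 < gam.
Proof.
set wv := invmx A *m one.
have Awv : A *m wv = one by rewrite /wv mulmxA mulmxV ?A_unit // mul1mx.
have e : gam = 2^-1 * dot wv (A *m wv).
  rewrite /den1H1 /Hmat -mulmxA -scalemxAl -scalemxAr mxE -/wv.
  by rewrite -/(dot one wv) -Awv dot_mull A_tr.
have wv0 : wv != 0 by apply: contraNneq one_neq0 => e0; rewrite -Awv e0 mulmx0.
have : 0 < dot wv wv.
  by rewrite lt_def dot_ge0 andbT; apply: contra wv0 => /eqP /dot_eq0 ->.
move=> h2; have h1 := A_lb wv; rewrite e; apply: mulr_gt0.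
  by rewrite invr_gt0 ltr0n.
by apply: lt_le_trans h1; apply: mulr_gt0.
Qed.

Lemma gam_neq0 : gam != 0.
Proof. by rewrite gt_eqF ?gam_pos. Qed.

Lemma one_H_one : one^T *m H *m one = gam%:M.
Proof. by rewrite [LHS]mx11_scalar. Qed.

Lemma oneG : one^T *m G = 0.
Proof.
rewrite /Gmat mulmxBr.
have -> : one^T *m (gam^-1 *: (H *m one *m one^T *m H)) =
   gam^-1 *: ((one^T *m H *m one) *m (one^T *m H)).
  by rewrite -scalemxAr !mulmxA.
rewrite one_H_one mul_scalar_mx scalerA mulVf ?gam_neq0 // scale1r subrr.
by [].
Qed.

Lemma oneg : one^T *m g = 1%:M.
Proof.
rewrite /gvec -scalemxAr mulmxA one_H_one scale_scalar_mx mulVf //.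
exact: gam_neq0.
Qed.

Lemma dot_one (c : 'cV[F]_K) : dot one c = \sum_k c k 0.
Proof. by rewrite dotE; apply: eq_bigr => k _; rewrite mxE mul1r. Qed.

Lemma sum_cs z : dot one (2%:R *: (G *m z) + g) = 1.
Proof.
rewrite /dot mulmxDr -scalemxAr mulmxA oneG mul0mx scaler0 add0r oneg.
by rewrite mxE.
Qed.

Lemma A_cs z : A *m (2%:R *: (G *m z) + g) - z =
  (gam^-1 * (2^-1 - (one^T *m H *m z) 0 0)) *: one.
Proof.
have e0 : A *m (G *m z) = A *m H *m z -
    gam^-1 *: (A *m H *m one *m (one^T *m H *m z)).
  rewrite /Gmat mulmxBl mulmxBr -[(gam^-1 *: _) *m z]scalemxAl.
  by rewrite -[A *m (gam^-1 *: _)]scalemxAr !mulmxA.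
have e1 : A *m (G *m z) = 2^-1 *: z -
    (gam^-1 * 2^-1 * (one^T *m H *m z) 0 0) *: one.
  by rewrite e0 AH -!scalemxAl !mul1mx mx11_mul !scalerA mulrA.
have e2 : A *m g = (gam^-1 * 2^-1) *: one.
  by rewrite /gvec -scalemxAr mulmxA AH -scalemxAl mul1mx scalerA.
rewrite mulmxDr -scalemxAr e1 e2.
apply/matrixP => i j; rewrite !mxE.
have := gam_neq0 => hg.
by field.
Qed.

End Alg.

Lemma sum3 (F : realType) (I : finType) (f a b c : I -> F) :
  (forall i, f i = a i - 2 * b i + c i) ->
  \sum_i f i = \sum_i a i - 2 * \sum_i b i + \sum_i c i.
Proof.
move=> h; rewrite (eq_bigr _ (fun i _ => h i)) big_split /= sumrB mulr_sumr.
by [].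
Qed.

Lemma sqnB (F : realType) m (a b : 'cV[F]_m) :
  sqn (a - b) = dot a a - 2 * dot b a + dot b b.
Proof. rewrite sqn_dot dotBl !dotBr (dotC a b); ring. Qed.

Section J.
Variables (F : realType) (T N K : nat) (Bm : 'I_N -> 'M[F]_(3, K))
  (w : nat -> 'I_N -> F) (lam : F).
Hypotheses (hK : (0 < K)%N) (hw : forall t (i : 'I_N), (t < T)%N -> 0 < w t i)
  (hlam : 0 < lam).

Local Notation A := (BtWB T Bm w + lam *: 1%:M).
Local Notation one := (onesK K : 'cV[F]_K).

Definition Jf (u : nat -> 'I_N -> 'cV[F]_3) (c : 'cV[F]_K) : F :=
  \sum_(t < T) \sum_(i < N) w t i * sqn (u t i - Bm i *m c) + lam * sqn (c - cbar K).
Definition zf (u : nat -> 'I_N -> 'cV[F]_3) : 'cV[F]_K :=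
  \sum_(t < T) \sum_(i < N) w t i *: ((Bm i)^T *m u t i) + lam *: cbar K.
Definition csf u := 2%:R *: (Gmat T Bm w lam *m zf u) + gvec T Bm w lam.
Definition kf (u : nat -> 'I_N -> 'cV[F]_3) : F :=
  \sum_(t < T) \sum_(i < N) w t i * dot (u t i) (u t i) + lam * dot (cbar K) (cbar K).

Lemma Jexp u c : Jf u c = dot c (A *m c) - 2 * dot c (zf u) + kf u.
Proof.
have e1 : \sum_(t < T) \sum_(i < N) w t i * sqn (u t i - Bm i *m c) =
  \sum_(t < T) \sum_(i < N) w t i * dot (Bm i *m c) (Bm i *m c)
  - 2 * \sum_(t < T) \sum_(i < N) w t i * dot (Bm i *m c) (u t i)
  + \sum_(t < T) \sum_(i < N) w t i * dot (u t i) (u t i).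
  apply: sum3 => t; apply: sum3 => i; rewrite sqnB; ring.
have e2 : dot c (zf u) = \sum_(t < T) \sum_(i < N) w t i * dot (Bm i *m c) (u t i)
   + lam * dot c (cbar K).
  rewrite /zf dotDr dot_sumr dotZr; congr (_ + _).
  apply: eq_bigr => t _; rewrite dot_sumr; apply: eq_bigr => i _.
  by rewrite dotZr dot_mull.
rewrite /Jf e1 e2 A_quad /kf sqnB (dotC (cbar K) c); ring.
Qed.

Lemma Jmain u (c : 'cV[F]_K) : \sum_k c k 0 = 1 ->
  Jf u c = Jf u (csf u) + dot (c - csf u) (A *m (c - csf u)).
Proof.
move=> hc; rewrite !Jexp.
set cs := csf u; set d := c - cs; set z := zf u.
have ec : c = cs + d by rewrite /d addrC subrK.
have h1 : dot cs (A *m d) = dot d (A *m cs) by rewrite dotC dot_mull A_tr.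
have h2 : dot d (A *m cs) = dot d z.
  apply/eqP; rewrite -subr_eq0 -dotBr /cs /csf A_cs // dotZr.
  rewrite dotC /d dotBr !dot_one hc -dot_one sum_cs // subrr mulr0 //.
have key : forall (a b zz : 'cV[F]_K) (k : F),
    dot a (A *m b) = dot b (A *m a) -> dot b (A *m a) = dot b zz ->
    dot (a + b) (A *m (a + b)) - 2 * dot (a + b) zz + k =
    dot a (A *m a) - 2 * dot a zz + k + dot b (A *m b).
  move=> a b zz k e1 e2; rewrite mulmxDr !dotDl !dotDr e1 e2; ring.
by rewrite [in LHS]ec; apply: key.
Qed.

End J.

Section Final.
Variables (F : realType) (T N K : nat)
  (Bm : 'I_N -> 'M[F]_(3, K)) (y : nat -> 'I_N -> 'cV[F]_3)
  (w : nat -> 'I_N -> F) (om ka : nat -> F) (lam : F).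
Hypotheses (hK : (0 < K)%N) (hw : forall t (i : 'I_N), (t < T)%N -> 0 < w t i)
  (hom : forall t, (t < T - 2)%N -> 0 <= om t)
  (hka : forall t, (t < T - 2)%N -> 0 <= ka t)
  (hlam : 0 < lam).

Definition u_of (R : nat -> 'M[F]_3) (s : nat -> 'cV[F]_3) :=
  fun t i => (R t)^T *m y t i - s t.

Lemma orthoC (M : 'M[F]_3) : M^T *m M = 1%:M -> M *m M^T = 1%:M.
Proof. exact: mulmx1C. Qed.

Lemma sqn_rot (M : 'M[F]_3) (z : 'cV[F]_3) : M^T *m M = 1%:M -> sqn (M^T *m z) = sqn z.
Proof. by move=> h; rewrite !sqn_dot dot_mull trmxK mulmxA (orthoC h) mul1mx. Qed.

Lemma sqn_ge0 m n (M : 'M[F]_(m, n)) : 0 <= sqn M.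
Proof. by apply: sumr_ge0 => i _; apply: sumr_ge0 => j _; apply: sqr_ge0. Qed.

Lemma smooth_ge0 Om v : 0 <= smooth T om ka Om v.
Proof.
apply: sumr_ge0 => t _; apply: addr_ge0; apply: mulr_ge0;
  rewrite ?sqn_ge0 ?hom ?hka //.
Qed.

Lemma Jf_ge0 u c : 0 <= Jf T Bm w lam u c.
Proof.
apply: addr_ge0; last by apply: mulr_ge0; [apply: ltW|apply: sqn_ge0].
apply: sumr_ge0 => t _; apply: sumr_ge0 => i _.
by apply: mulr_ge0; [apply: ltW; apply: hw|apply: sqn_ge0].
Qed.

Lemma cstarE R s : cstar T Bm y w lam R s = csf T Bm w lam (u_of R s).
Proof. by []. Qed.

Lemma QobjE R s Om v : Qobj T Bm y w om ka lam R s Om v =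
  Jf T Bm w lam (u_of R s) (cstar T Bm y w lam R s) + smooth T om ka Om v.
Proof.
rewrite /Qobj /Jf; congr (_ + _ + _).
by apply: eq_bigr => t _; apply: eq_bigr => i _; rewrite /u_of addrAC.
Qed.

Lemma PobjE R p Om v c s :
  (forall t, (t < T)%N -> (R t)^T *m R t = 1%:M) ->
  (forall t, (t < T)%N -> s t = (R t)^T *m p t) ->
  Pobj T Bm y w om ka lam R p Om v c = Jf T Bm w lam (u_of R s) c + smooth T om ka Om v.
Proof.
move=> hR hs; rewrite /Pobj /Jf; congr (_ + _ + _).
apply: eq_bigr => t _; apply: eq_bigr => i _; congr (_ * _).
rewrite -(sqn_rot _ (hR t (ltn_ord t))) /u_of (hs t (ltn_ord t)) !mulmxBr.
by rewrite !mulmxA (hR t (ltn_ord t)) mul1mx addrAC.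
Qed.

Lemma Pfeas_Qfeas R p Om v (c : 'cV[F]_K) s :
  (forall t, (t < T)%N -> s t = (R t)^T *m p t) ->
  Pfeas T R p Om v c -> Qfeas T R s Om v.
Proof.
move=> hs [hR hO hc hpr]; split => // t ht.
have [e1 e2] := hpr t ht; split => //.
have htT : (t < T)%N by move: ht; rewrite ltn_subRL; apply: leq_trans; rewrite addnC leq_addr.
have ht1 : (t.+1 < T)%N by move: ht; rewrite ltn_subRL add1n.
rewrite (hs _ ht1) (hs _ htT) e2 trmx_mul !mulmxA (orthoC (hO t ht).1) mul1mx.
by rewrite e1 mulmxDr mulmxA (hR t htT).1 mul1mx.
Qed.

Lemma Qfeas_Pfeas R s Om v p (c : 'cV[F]_K) :
  (forall t, (t < T)%N -> p t = R t *m s t) -> \sum_k c k 0 = 1 ->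
  Qfeas T R s Om v -> Pfeas T R p Om v c.
Proof.
move=> hp hc [hR hO hq]; split => // t ht.
have [e1 e2] := hq t ht; split => //.
have htT : (t < T)%N by move: ht; rewrite ltn_subRL; apply: leq_trans; rewrite addnC leq_addr.
have ht1 : (t.+1 < T)%N by move: ht; rewrite ltn_subRL add1n.
by rewrite (hp _ ht1) (hp _ htT) e2 -mulmxA e1 mulmxDr.
Qed.

End Final.

Section Main.
Variables (F : realType) (T N K : nat)
  (Bm : 'I_N -> 'M[F]_(3, K)) (y : nat -> 'I_N -> 'cV[F]_3)
  (w : nat -> 'I_N -> F) (om ka : nat -> F) (lam : F).
Hypotheses (hK : (0 < K)%N) (hw : forall t (i : 'I_N), (t < T)%N -> 0 < w t i)
  (hom : forall t, (t < T - 2)%N -> 0 <= om t)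
  (hka : forall t, (t < T - 2)%N -> 0 <= ka t)
  (hlam : 0 < lam).

Local Notation A := (BtWB T Bm w + lam *: 1%:M).

Lemma Q_ge0 (d : 'cV[F]_K) : 0 <= dot d (A *m d).
Proof.
apply: le_trans (A_lb Bm lam hw d); apply: mulr_ge0; [exact: ltW|exact: dot_ge0].
Qed.

Lemma cs_sum (R : nat -> 'M[F]_3) (s : nat -> 'cV[F]_3) : \sum_k (cstar T Bm y w lam R s) k 0 = 1.
Proof. by rewrite -dot_one (sum_cs Bm hK hw hlam). Qed.

Lemma J_le (R : nat -> 'M[F]_3) (s : nat -> 'cV[F]_3) (c : 'cV[F]_K) : \sum_k c k 0 = 1 ->
  Jf T Bm w lam (u_of y R s) (cstar T Bm y w lam R s) <= Jf T Bm w lam (u_of y R s) c.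
Proof.
move=> hc; rewrite (Jmain Bm hK hw hlam _ hc) -cstarE lerDl; exact: Q_ge0.
Qed.

Lemma orth_of_P (R : nat -> 'M[F]_3) (p : nat -> 'cV[F]_3) (Om : nat -> 'M[F]_3) (v : nat -> 'cV[F]_3) (c : 'cV[F]_K) : Pfeas T R p Om v c ->
  forall t, (t < T)%N -> (R t)^T *m R t = 1%:M.
Proof. by case=> hR _ _ _ t ht; case: (hR t ht). Qed.

Lemma orth_of_Q (R : nat -> 'M[F]_3) (s : nat -> 'cV[F]_3) (Om : nat -> 'M[F]_3) (v : nat -> 'cV[F]_3) : Qfeas T R s Om v ->
  forall t, (t < T)%N -> (R t)^T *m R t = 1%:M.
Proof. by case=> hR _ _ t ht; case: (hR t ht). Qed.

Lemma RRt (M : 'M[F]_3) (z : 'cV[F]_3) : M^T *m M = 1%:M -> z = M *m (M^T *m z).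
Proof. by move=> h; rewrite mulmxA (orthoC h) mul1mx. Qed.

Lemma RtR (M : 'M[F]_3) (z : 'cV[F]_3) : M^T *m M = 1%:M -> z = M^T *m (M *m z).
Proof. by move=> h; rewrite mulmxA h mul1mx. Qed.

Lemma part_opt : forall (Rot : nat -> 'M[F]_3) (p : nat -> 'cV[F]_3)
          (Om : nat -> 'M[F]_3) (v : nat -> 'cV[F]_3) (c : 'cV[F]_K),
     let s := fun t => (Rot t)^T *m p t in
     Popt T Bm y w om ka lam Rot p Om v c <->
     (Qopt T Bm y w om ka lam Rot s Om v /\ c = cstar T Bm y w lam Rot s).
Proof.
move=> R p Om v c s; split.
  move=> [hP hopt].
  have hR := orth_of_P hP.
  have hQ : Qfeas T R s Om v by apply: (Pfeas_Qfeas (p := p) _ hP).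
  have EP := PobjE Bm y w om ka lam Om v c hR (s := s) (fun t _ => erefl).
  have hP' : Pfeas T R p Om v (cstar T Bm y w lam R s).
    by apply: (Qfeas_Pfeas _ (cs_sum R s) hQ) => t ht; apply: RRt; apply: hR.
  have ec : c = cstar T Bm y w lam R s.
    have := hopt _ _ _ _ _ hP'.
    rewrite EP (PobjE Bm y w om ka lam Om v _ hR (s := s) (fun t _ => erefl)).
    rewrite lerD2r (Jmain Bm hK hw hlam _ (let: And4 _ _ hc _ := hP in hc)).
    rewrite -cstarE gerDl => hle.
    have h0 : dot (c - cstar T Bm y w lam R s)
      (A *m (c - cstar T Bm y w lam R s)) = 0.
      by apply/eqP; rewrite eq_le hle Q_ge0.
    by apply/eqP; rewrite -subr_eq0; apply/eqP; apply: (A_pos hw hlam h0).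
  split => //; split => // R' s' Om' v' hQ'.
  have hR' := orth_of_Q hQ'.
  set p' := fun t => R' t *m s' t.
  have hP'' : Pfeas T R' p' Om' v' (cstar T Bm y w lam R' s').
    by apply: (Qfeas_Pfeas _ (cs_sum R' s') hQ').
  have := hopt _ _ _ _ _ hP''.
  rewrite EP (PobjE Bm y w om ka lam Om' v' _ hR' (s := s')); last first.
    by move=> t ht; rewrite /p'; apply: RtR; apply: hR'.
  by rewrite !QobjE -ec.
move=> [[hQ hqopt] ec].
have hR := orth_of_Q hQ.
have hP : Pfeas T R p Om v c.
  by rewrite ec; apply: (Qfeas_Pfeas _ (cs_sum R s) hQ) => t ht; apply: RRt; apply: hR.
split => // R' p' Om' v' c' hP'.
have hR' := orth_of_P hP'.
set s' := fun t => (R' t)^T *m p' t.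
have hQ' : Qfeas T R' s' Om' v' by apply: (Pfeas_Qfeas (p := p') _ hP').
have := hqopt _ _ _ _ hQ'.
rewrite !QobjE (PobjE Bm y w om ka lam Om v c hR (s := s) (fun t _ => erefl)).
rewrite (PobjE Bm y w om ka lam Om' v' c' hR' (s := s') (fun t _ => erefl)) -ec.
move=> hle; apply: le_trans hle _; rewrite lerD2r.
by apply: J_le; case: hP'.
Qed.

Lemma Pobj_ge0 (R : nat -> 'M[F]_3) (p : nat -> 'cV[F]_3) (Om : nat -> 'M[F]_3) (v : nat -> 'cV[F]_3) (c : 'cV[F]_K) : 0 <= Pobj T Bm y w om ka lam R p Om v c.
Proof.
apply: addr_ge0; last exact: smooth_ge0.
apply: addr_ge0; last by apply: mulr_ge0; [apply: ltW|apply: sqn_ge0].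
apply: sumr_ge0 => t _; apply: sumr_ge0 => i _.
by apply: mulr_ge0; [apply: ltW; apply: hw|apply: sqn_ge0].
Qed.

Lemma Qobj_ge0 (R : nat -> 'M[F]_3) (s : nat -> 'cV[F]_3) (Om : nat -> 'M[F]_3) (v : nat -> 'cV[F]_3) : 0 <= Qobj T Bm y w om ka lam R s Om v.
Proof. rewrite QobjE; apply: addr_ge0; [exact: Jf_ge0|exact: smooth_ge0]. Qed.

Lemma SO3_1 : is_SO3 (1%:M : 'M[F]_3).
Proof. by split; rewrite ?trmx1 ?mulmx1 ?det1. Qed.

Lemma part_val : Pval T Bm y w om ka lam = Qval T Bm y w om ka lam.
Proof.
rewrite /Pval /Qval; set SP := (X in inf X = _); set SQ := (X in _ = inf X).
have QinP : forall x, SQ x -> SP x.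
  move=> x [R [s [Om [v [hQ ->]]]]].
  have hR := orth_of_Q hQ.
  exists R, (fun t => R t *m s t), Om, v, (cstar T Bm y w lam R s); split.
    exact: (Qfeas_Pfeas _ (cs_sum R s) hQ).
  rewrite QobjE (PobjE Bm y w om ka lam Om v _ hR (s := s)) //.
  by move=> t ht; apply: RtR; apply: hR.
have PgeQ : forall x, SP x -> exists2 x', SQ x' & x' <= x.
  move=> x [R [p [Om [v [c [hP ->]]]]]].
  have hR := orth_of_P hP.
  set s := fun t => (R t)^T *m p t.
  exists (Qobj T Bm y w om ka lam R s Om v).
    by exists R, s, Om, v; split => //; apply: (Pfeas_Qfeas (p := p) _ hP).
  rewrite QobjE (PobjE Bm y w om ka lam Om v c hR (s := s)) // lerD2r.
  by apply: J_le; case: hP.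
have neQ : nonempty SQ.
  exists (Qobj T Bm y w om ka lam (fun _ => 1%:M) (fun _ => 0) (fun _ => 1%:M) (fun _ => 0)).
  exists (fun _ => 1%:M), (fun _ => 0), (fun _ => 1%:M), (fun _ => 0); split => //.
  split => [t _|t _|t _]; try exact: SO3_1.
  by rewrite mulmx0 addr0 mulmx1.
have lbP : has_lbound SP.
  by exists 0 => x [R [p [Om [v [c [_ ->]]]]]]; apply: Pobj_ge0.
have lbQ : has_lbound SQ.
  by exists 0 => x [R [s [Om [v [_ ->]]]]]; apply: Qobj_ge0.
have neP : nonempty SP by case: neQ => x /QinP hx; exists x.
apply/eqP; rewrite eq_le; apply/andP; split.
  apply: lb_le_inf => // x /QinP hx; exact: ge_inf.
apply: lb_le_inf => // x /PgeQ [x' hx' le]; apply: le_trans le.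
exact: ge_inf.
Qed.

End Main.

Theorem proposition2 (F : realType) (T N K : nat)
  (hT : (2 <= T)%N) (hN : (1 <= N)%N) (hK : (1 <= K)%N)
  (Bm : 'I_N -> 'M[F]_(3, K)) (y : nat -> 'I_N -> 'cV[F]_3)
  (w : nat -> 'I_N -> F) (om ka : nat -> F) (lam : F)
  (hw : forall t (i : 'I_N), (t < T)%N -> 0 < w t i)
  (hom : forall t, (t < T - 2)%N -> 0 <= om t)
  (hka : forall t, (t < T - 2)%N -> 0 <= ka t)
  (hlam : 0 < lam) :
  (* (i) *)
  (Pval T Bm y w om ka lam = Qval T Bm y w om ka lam /\
   forall (Rot : nat -> 'M[F]_3) (p : nat -> 'cV[F]_3)
          (Om : nat -> 'M[F]_3) (v : nat -> 'cV[F]_3) (c : 'cV[F]_K),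
     let s := fun t => (Rot t)^T *m p t in
     Popt T Bm y w om ka lam Rot p Om v c <->
     (Qopt T Bm y w om ka lam Rot s Om v /\ c = cstar T Bm y w lam Rot s))
  /\
  (* (ii) *)
  ((exists P : {mpoly F[nvar T]},
      (msize P <= 3)%N /\
      forall x : 'I_(nvar T) -> F,
        Qobj T Bm y w om ka lam (dec_Rot x) (dec_s x) (dec_Om x) (dec_v x)
        = P.@[x])
   /\
   (exists cs : seq {mpoly F[nvar T]},
      all (fun q => msize q <= 3)%N cs /\
      forall x : 'I_(nvar T) -> F,
        Qfeas T (dec_Rot x) (dec_s x) (dec_Om x) (dec_v x)
        <-> all (fun q => q.@[x] == 0) cs)).
Proof.
split.
  split; first exact: (part_val Bm y hK hw hom hka hlam).
  exact: (part_opt Bm y om ka hK hw hlam).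
split.
  have [P [hP hf]] := pr_Qobj T Bm y w om ka lam.
  by exists P; split.
have [cs [h1 h2]] := @Qrep_Qfeas F T.
by exists cs; split.
Qed.
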